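(* Let $\varphi:(0,1]\to(0,\infty)$ be differentiable with $\int_0^1\frac{ds}{\varphi(s)}<\infty$ and \[ \frac{\varphi'(s)}{\varphi(s)}\le\frac{2}{s}\quad\text{for all } s\in(0,1). \] Define, for $A\in[0,1]$ and $N\in[0,1]$, \[ T(A,N)=N\int_0^{N/(A+1)}\frac{ds}{\varphi(s)}. \] Then $T$ is a convex function of $(A,N)$ on $[0,1]\times[0,1]$. *)

(* Defs.v *)
From HB Require Import structures.
From mathcomp Require Import all_boot all_order all_algebra.
From mathcomp Require Import all_classical all_reals all_analysis.
Set Implicit Arguments. Unset Strict Implicit. Unset Printing Implicit Defensive.
Import Order.TTheory GRing.Theory Num.Theory.
Import numFieldNormedType.Exports.
Local Open Scope classical_set_scope.
Local Open Scope ring_scope.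

Definition inv_int (R : realType) (phi : R -> R) (x : R) : \bar R :=
  (\int[@lebesgue_measure R]_(s in `]0%R, x]) ((phi s)^-1)%:E)%E.

Definition Tfun (R : realType) (phi : R -> R) (A N : R) : R :=
  N * fine (inv_int phi (N / (A + 1))).

(* Main.v *)
Require Import Defs.
From HB Require Import structures.
From mathcomp Require Import all_boot all_order all_algebra.
From mathcomp Require Import all_classical all_reals all_analysis.
From mathcomp Require Import measurable_realfun ring lra.
Import Order.TTheory GRing.Theory Num.Theory.
Import numFieldNormedType.Exports.
Local Open Scope classical_set_scope.
Local Open Scope ring_scope.
Set Implicit Arguments. Unset Strict Implicit.

Lemma left_cont1 (R : realType) (phi : R -> R)
  (phi_der1 : cvg ((fun h : R => h^-1 * (phi (h + 1) - phi 1)) @ 0^'-)) :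
  phi x @[x --> 1^'-] --> phi 1.
Proof.
have h0 : phi (h + 1) @[h --> (0:R)^'-] --> phi 1.
  have : (phi 1 + h * (h^-1 * (phi (h + 1) - phi 1))) @[h --> (0:R)^'-] --> phi 1 + 0 * lim ((fun h : R => h^-1 * (phi (h + 1) - phi 1)) @ 0^'-).
    apply: cvgD; first exact: cvg_cst.
    apply: cvgM => //; exact: cvg_at_left_filter cvg_id.
  rewrite mul0r addr0; apply: cvg_trans; apply: near_eq_cvg.
  near=> h; have hn : h != 0 by near: h; exact: nbhs_left_neq.
  by rewrite mulrA mulfV // mul1r addrC subrK.
apply/cvg_at_leftP => u [u1 uc].
have := (proj1 (cvg_at_leftP (fun h => phi (h + 1)) 0 (phi 1)) h0 (fun n => u n - 1)).
have -> : (fun n => phi (u n - 1 + 1)) = (fun n => phi (u n)).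
  by apply: funext => n; rewrite subrK.
apply; split.
  by move=> n; rewrite subr_lt0.
by rewrite -(subrr 1); apply: cvgB => //; exact: cvg_cst.
Unshelve. all: by end_near. Qed.
Lemma qder (R : realType) (x : R) (x0 : x != 0) :
  is_derive x (1:R) (fun s : R => (s ^+ 2)^-1) (- (x^+2)^-2 * (2 * x)).
Proof.
have Dx : is_derive x (1:R) (fun s : R => s ^+ 2) (2 * x).
  have := @is_deriveX R R id 2 x 1 1 (is_derive_id x 1).
  have -> : (fun s : R => s ^+ 2) = (@id R) ^+ 2 by apply/funext => s; rewrite exprfctE.
  move=> H; apply: (is_derive_eq H).
  by rewrite expr1; apply: mulr1.
by apply: is_deriveV; rewrite ?expf_neq0.
Qed.

Lemma gder (R : realType) (phi : R -> R) (x : R) (x0 : x != 0) :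
  derivable phi x 1 ->
  is_derive x 1 (fun s => phi s * (s ^+ 2)^-1)
     (phi x * (- (x^+2)^-2 * (2 * x)) + (x ^+ 2)^-1 * derive1 phi x).
Proof.
move=> dp.
have Dp : is_derive x 1 phi (derive1 phi x) by rewrite derive1E; exact: derivableP.
have Dq := qder x0.
exact: is_deriveM Dp Dq.
Qed.

Lemma gmono (R : realType) (phi : R -> R)
  (phi_pos : forall s : R, 0 < s <= 1 -> 0 < phi s)
  (phi_der : forall s : R, 0 < s < 1 -> derivable phi s 1)
  (phi_der1 : cvg ((fun h : R => h^-1 * (phi (h + 1) - phi 1)) @ 0^'-))
  (phi_log : forall s : R, 0 < s < 1 -> (derive1 phi s) / phi s <= 2 / s)
  (a b : R) : 0 < a -> a <= b -> b <= 1 ->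
  phi b * (b ^+ 2)^-1 <= phi a * (a ^+ 2)^-1.
Proof.
move=> a0 ab b1.
have [a1|a1] := eqVneq a 1.
  by have -> : b = a by apply/le_anti; rewrite ab a1 b1.
have {a1} a1 : a < 1 by rewrite lt_neqAle a1 (le_trans ab b1).
set g := fun s => phi s * (s ^+ 2)^-1.
have gd x : x \in `]a, 1[ -> is_derive x 1 g
     (phi x * (- (x^+2)^-2 * (2 * x)) + (x ^+ 2)^-1 * derive1 phi x).
  rewrite in_itv /= => /andP[ax x1]; apply: gder.

    by rewrite gt_eqF // (lt_trans a0).
  by apply: phi_der; rewrite x1 (lt_trans a0).
have gc x : 0 < x < 1 -> {for x, continuous g}.
  move=> /andP[x0 x1]; apply: differentiable_continuous; apply/derivable1_diffP.
  have [] := gder (lt0r_neq0 x0) (phi_der x _); first by rewrite x0 x1.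
  by [].
apply: (@ler0_derive1_le_cc R g a 1); last 3 first.
- by rewrite in_itv /= ab b1.
- by rewrite in_itv /= lexx ltW.
- exact: ab.
- by move=> x /gd [].
- move=> x xa; rewrite derive1E; have [_ ->] := gd x xa.
  move: xa; rewrite in_itv /= => /andP[ax x1].
  have x0 : 0 < x by rewrite (lt_trans a0).
  have px : 0 < phi x by apply: phi_pos; rewrite x0 ltW.
  have hd : derive1 phi x <= 2 * phi x / x.
    have := phi_log x; rewrite x0 x1 => /(_ isT).
    by rewrite ler_pdivrMr // mulrAC.
  have -> : phi x * (- (x ^+ 2)^-2 * (2 * x)) + (x ^+ 2)^-1 * derive1 phi x
       = (x ^+ 2)^-1 * (derive1 phi x - 2 * phi x / x).
    by field; rewrite gt_eqF.
  apply: mulr_ge0_le0; [by rewrite invr_ge0 exprn_ge0 // ltW | by rewrite subr_le0].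
- apply/continuous_within_itvP => //; split.
  + move=> x; rewrite in_itv /= => /andP[ax x1]; apply: gc.
    by rewrite x1 (lt_trans a0).
  + by apply: cvg_at_right_filter; apply: gc; rewrite a0 a1.
  + apply: cvgM; first exact: left_cont1 phi_der1.
    apply: cvg_at_left_filter.
    have [d1 _] := qder (oner_neq0 R).
    have := differentiable_continuous (proj1 (derivable1_diffP _ _) d1).
    by [].
Qed.
Lemma Fder (R : realType) (c x : R) (x0 : x != 0) :
  is_derive x (1:R) (fun s : R => - c * s^-1) (c * (x ^+ 2)^-1).
Proof.
have D : is_derive x (1:R) (fun s : R => s^-1) (- (x ^- 2) *: 1).
  exact: (@is_deriveV R id x 1 1 x0 (is_derive_id x 1)).
have := @is_deriveZ R R R (fun s : R => s^-1) (- c) x 1 _ D.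
move=> H.
have H' : is_derive x (1:R) (fun s : R => - c * s^-1) ((-c) *: (- (x ^- 2) *: 1)) := H.
apply: (is_derive_eq H').
by rewrite /GRing.scale /=; field.
Qed.

Lemma meas_oc (R : realType) (h : R -> R) (a b : R) :
  {in `]a, b[, continuous h} -> measurable_fun `]a, b] (fun x => (h x)%:E).
Proof.
move=> ch; apply/measurable_EFinP.
apply: (@measurable_fun_itv_oc _ a b false true).
apply: subspace_continuous_measurable_fun => //.
rewrite continuous_open_subspace //.
by move=> x; rewrite inE /= => xin; exact: ch.
Qed.

Lemma qcont (R : realType) (c x : R) : x != 0 ->
  {for x, continuous (fun s : R => c * (s ^+ 2)^-1)}.
Proof.
move=> x0; apply: cvgM; first exact: cvg_cst.
have [d1 _] := qder x0.
have := differentiable_continuous (proj1 (derivable1_diffP _ _) d1).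
by [].
Qed.

Lemma int_q (R : realType) (c a b : R) : 0 < a -> a <= b ->
  (\int[@lebesgue_measure R]_(s in `]a, b]) (c * (s ^+ 2)^-1)%:E
    = (c * (a^-1 - b^-1))%:E)%E.
Proof.
move=> a0; rewrite le_eqVlt => /predU1P[<-|ab].
  rewrite set_itv_ge ?integral_set0 ?subrr ?mulr0 //.
  by rewrite bnd_simp ltxx.
have ne x : a <= x -> x != 0 by move=> ax; rewrite gt_eqF // (lt_le_trans a0).
rewrite integral_itv_obnd_cbnd; last first.
  apply: meas_oc => x; rewrite in_itv /= => /andP[ax _].
  by apply: qcont; apply: ne; rewrite ltW.
rewrite (@continuous_FTC2 R _ (fun s : R => - c * s^-1)) //.
- by rewrite -EFinB; congr (_%:E); ring.
- apply/continuous_within_itvP => //; split.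
  + by move=> x; rewrite in_itv /= => /andP[ax _]; apply: qcont; apply: ne; rewrite ltW.
  + by apply: cvg_at_right_filter; apply: qcont; apply: ne.
  + by apply: cvg_at_left_filter; apply: qcont; apply: ne; rewrite ltW.
- have Fc x : a <= x -> {for x, continuous (fun s : R => - c * s^-1)}.
    move=> ax; have [d1 _] := Fder c (ne x ax).
    have := differentiable_continuous (proj1 (derivable1_diffP _ _) d1).
    by [].
  split.
  + by move=> x; rewrite in_itv /= => /andP[ax _]; have [] := Fder c (ne x (ltW ax)).
  + by apply: cvg_at_right_filter; apply: Fc.
  + by apply: cvg_at_left_filter; apply: Fc; rewrite ltW.
- move=> x; rewrite in_itv /= => /andP[ax _].
  by rewrite derive1E; have [_ ->] := Fder c (ne x (ltW ax)).
Qed.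

Lemma fcont (R : realType) (phi : R -> R)
  (phi_pos : forall s : R, 0 < s <= 1 -> 0 < phi s)
  (phi_der : forall s : R, 0 < s < 1 -> derivable phi s 1) (x : R) :
  0 < x < 1 -> {for x, continuous (fun s => (phi s)^-1)}.
Proof.
move=> /andP[x0 x1].
have px : phi x != 0 by rewrite gt_eqF // phi_pos // x0 ltW.
have dx : derivable phi x 1 by apply: phi_der; rewrite x0 x1.
have [d _] := @is_deriveV R phi x _ 1 px (derivableP dx).
have := differentiable_continuous (proj1 (derivable1_diffP _ _) d).
by [].
Qed.

Lemma meas_f (R : realType) (phi : R -> R)
  (phi_pos : forall s : R, 0 < s <= 1 -> 0 < phi s)
  (phi_der : forall s : R, 0 < s < 1 -> derivable phi s 1) (a b : R) :
  0 <= a -> b <= 1 ->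
  measurable_fun `]a, b] (fun s => ((phi s)^-1)%:E).
Proof.
move=> a0 b1.
apply: (measurable_funS (E := (`]0, 1] : set R))) => //.
  move=> z /=; rewrite !in_itv /= => /andP[az zb].
  by rewrite (le_lt_trans a0 az) (le_trans zb b1).
apply: meas_oc => x; rewrite in_itv /= => xin.
exact: fcont.
Qed.

Lemma f_ge0 (R : realType) (phi : R -> R)
  (phi_pos : forall s : R, 0 < s <= 1 -> 0 < phi s) (a b : R) :
  0 <= a -> b <= 1 -> forall x, `]a, b]%classic x -> (0 <= ((phi x)^-1)%:E)%E.
Proof.
move=> a0 b1 x; rewrite /= in_itv /= => /andP[ax xb].
rewrite lee_fin invr_ge0; apply/ltW/phi_pos.
by rewrite (le_lt_trans a0 ax) (le_trans xb b1).
Qed.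

Lemma Fsplit (R : realType) (phi : R -> R)
  (phi_pos : forall s : R, 0 < s <= 1 -> 0 < phi s)
  (phi_der : forall s : R, 0 < s < 1 -> derivable phi s 1) (x y : R) :
  0 <= x -> x <= y -> y <= 1 ->
  inv_int phi y = (inv_int phi x +
     \int[@lebesgue_measure R]_(s in `]x, y]) ((phi s)^-1)%:E)%E.
Proof.
move=> x0 xy y1.
have E := @itv_bndbnd_setU _ R (BRight 0) (BRight x) (BRight y).
rewrite /inv_int E ?bnd_simp // ge0_integral_setU //.
- by rewrite -E ?bnd_simp //; apply: meas_f => //; rewrite (le_trans x0 xy).
- by rewrite -E ?bnd_simp // => z; apply: f_ge0 => //; rewrite (le_trans x0 xy).
- rewrite disj_set2E; apply/eqP/seteqP; split => z //=.
  rewrite !in_itv /= => -[/andP[_ zx] /andP[xz _]].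
  by move: (lt_le_trans xz zx); rewrite ltxx.
Qed.

Lemma Ffin (R : realType) (phi : R -> R)
  (phi_pos : forall s : R, 0 < s <= 1 -> 0 < phi s)
  (phi_der : forall s : R, 0 < s < 1 -> derivable phi s 1)
  (phi_int : (inv_int phi 1 < +oo)%E) (x : R) :
  0 <= x -> x <= 1 -> inv_int phi x = (fine (inv_int phi x))%:E /\ 0 <= fine (inv_int phi x).
Proof.
move=> x0 x1.
have i0 : (0 <= inv_int phi x)%E by apply: integral_ge0; apply: f_ge0.
have ifin : inv_int phi x \is a fin_num.
  rewrite ge0_fin_numE //; apply: le_lt_trans phi_int.
  apply: ge0_subset_integral => //.
  - exact: meas_f.
  - exact: f_ge0.
  - move=> z /=; rewrite !in_itv /= => /andP[-> zx] /=; exact: le_trans zx x1.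
by rewrite fineK //; split => //; rewrite -lee_fin fineK.
Qed.

Definition Fv (R : realType) (phi : R -> R) (x : R) : R := fine (inv_int phi x).

Lemma Fdiff (R : realType) (phi : R -> R)
  (phi_pos : forall s : R, 0 < s <= 1 -> 0 < phi s)
  (phi_der : forall s : R, 0 < s < 1 -> derivable phi s 1)
  (phi_int : (inv_int phi 1 < +oo)%E) (x y : R) :
  0 <= x -> x <= y -> y <= 1 ->
  ((Fv phi y - Fv phi x)%:E =
     \int[@lebesgue_measure R]_(s in `]x, y]) ((phi s)^-1)%:E)%E.
Proof.
move=> x0 xy y1.
have x1 : x <= 1 by exact: le_trans y1.
have [ex _] := Ffin phi_pos phi_der phi_int x0 x1.
have y0 : 0 <= y by exact: le_trans xy.
have [ey _] := Ffin phi_pos phi_der phi_int y0 y1.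
rewrite /Fv EFinB -ex -ey (Fsplit phi_pos phi_der x0 xy y1) [X in (X - _)%E]addeC addeK //.
by rewrite ex.
Qed.

Lemma Fup (R : realType) (phi : R -> R)
  (phi_pos : forall s : R, 0 < s <= 1 -> 0 < phi s)
  (phi_der : forall s : R, 0 < s < 1 -> derivable phi s 1)
  (phi_der1 : cvg ((fun h : R => h^-1 * (phi (h + 1) - phi 1)) @ 0^'-))
  (phi_int : (inv_int phi 1 < +oo)%E)
  (phi_log : forall s : R, 0 < s < 1 -> (derive1 phi s) / phi s <= 2 / s)
  (x y : R) : 0 < x -> x <= y -> y <= 1 ->
  Fv phi y - Fv phi x <= (y ^+ 2 * (phi y)^-1) * (x^-1 - y^-1).
Proof.
move=> x0 xy y1.
rewrite -lee_fin -(int_q _ x0 xy) (Fdiff phi_pos phi_der phi_int (ltW x0) xy y1).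
apply: ge0_le_integral => //.
- exact: f_ge0 (ltW x0) y1.
- exact: meas_f (ltW x0) y1.
- apply: meas_oc => s; rewrite in_itv /= => /andP[xs _].
  by apply: qcont; rewrite gt_eqF // (lt_trans x0).
- move=> s; rewrite /= in_itv /= => /andP[xs sy].
  have s0 : 0 < s by rewrite (lt_trans x0).
  have y0 : 0 < y by rewrite (lt_le_trans s0).
  have ps : 0 < phi s by apply: phi_pos; rewrite s0 (le_trans sy).
  have py : 0 < phi y by apply: phi_pos; rewrite y0.
  have gm := gmono phi_pos phi_der phi_der1 phi_log s0 sy y1.
  rewrite lee_fin.
  have -> : (phi s)^-1 = (phi s * (s ^+ 2)^-1)^-1 * (s ^+ 2)^-1.
    by field; rewrite !gt_eqF.
  have -> : y ^+ 2 * (phi y)^-1 * (s ^+ 2)^-1 = (phi y * (y ^+ 2)^-1)^-1 * (s ^+ 2)^-1.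
    by field; rewrite !gt_eqF.
  apply: ler_wpM2r; first by rewrite invr_ge0 exprn_ge0 // ltW.
  by rewrite lef_pV2 // posrE ?divr_gt0 ?exprn_gt0.
Qed.

Lemma Flow (R : realType) (phi : R -> R)
  (phi_pos : forall s : R, 0 < s <= 1 -> 0 < phi s)
  (phi_der : forall s : R, 0 < s < 1 -> derivable phi s 1)
  (phi_der1 : cvg ((fun h : R => h^-1 * (phi (h + 1) - phi 1)) @ 0^'-))
  (phi_int : (inv_int phi 1 < +oo)%E)
  (phi_log : forall s : R, 0 < s < 1 -> (derive1 phi s) / phi s <= 2 / s)
  (y z : R) : 0 < y -> y <= z -> z <= 1 ->
  (y ^+ 2 * (phi y)^-1) * (y^-1 - z^-1) <= Fv phi z - Fv phi y.
Proof.
move=> y0 yz z1.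
rewrite -lee_fin -(int_q _ y0 yz) (Fdiff phi_pos phi_der phi_int (ltW y0) yz z1).
apply: ge0_le_integral => //.
- move=> s; rewrite /= in_itv /= => /andP[ys _].
  have py : 0 < phi y by apply: phi_pos; rewrite y0 (le_trans yz).
  have s0 : 0 < s by rewrite (lt_trans y0).
  rewrite lee_fin; apply: mulr_ge0; last by rewrite invr_ge0 exprn_ge0 // ltW.
  by apply: mulr_ge0; rewrite ?invr_ge0 ?exprn_ge0 // ltW.
- apply: meas_oc => s; rewrite in_itv /= => /andP[xs _].
  by apply: qcont; rewrite gt_eqF // (lt_trans y0).
- exact: meas_f (ltW y0) z1.
- move=> s; rewrite /= in_itv /= => /andP[ys sz].
  have s0 : 0 < s by rewrite (lt_trans y0).
  have ps : 0 < phi s by apply: phi_pos; rewrite s0 (le_trans sz).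
  have py : 0 < phi y by apply: phi_pos; rewrite y0 (le_trans yz).
  have gm := gmono phi_pos phi_der phi_der1 phi_log y0 (ltW ys) (le_trans sz z1).
  rewrite lee_fin.
  have -> : (phi s)^-1 = (phi s * (s ^+ 2)^-1)^-1 * (s ^+ 2)^-1.
    by field; rewrite !gt_eqF.
  have -> : y ^+ 2 * (phi y)^-1 * (s ^+ 2)^-1 = (phi y * (y ^+ 2)^-1)^-1 * (s ^+ 2)^-1.
    by field; rewrite !gt_eqF.
  apply: ler_wpM2r; first by rewrite invr_ge0 exprn_ge0 // ltW.
  by rewrite lef_pV2 // posrE ?divr_gt0 ?exprn_gt0.
Qed.

Lemma Hconv_ord (R : realType) (phi : R -> R)
  (phi_pos : forall s : R, 0 < s <= 1 -> 0 < phi s)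
  (phi_der : forall s : R, 0 < s < 1 -> derivable phi s 1)
  (phi_der1 : cvg ((fun h : R => h^-1 * (phi (h + 1) - phi 1)) @ 0^'-))
  (phi_int : (inv_int phi 1 < +oo)%E)
  (phi_log : forall s : R, 0 < s < 1 -> (derive1 phi s) / phi s <= 2 / s)
  (x z l : R) : 0 <= x -> x <= z -> z <= 1 -> 0 <= l -> l <= 1 ->
  (l * x + (1 - l) * z) * Fv phi (l * x + (1 - l) * z)
    <= l * (x * Fv phi x) + (1 - l) * (z * Fv phi z).
Proof.
move=> x0 xz z1 l0 l1.
have z0 : 0 <= z by exact: le_trans xz.
have x1 : x <= 1 by exact: le_trans z1.
have [_ Fx0] := Ffin phi_pos phi_der phi_int x0 x1.
have [_ Fz0] := Ffin phi_pos phi_der phi_int z0 z1.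
set y := l * x + (1 - l) * z.
have xy : x <= y by rewrite /y; nra.
have yz : y <= z by rewrite /y; nra.
have y1 : y <= 1 by exact: le_trans z1.
have [y0|y0] := leP y 0.
  have -> : y = 0 by apply/le_anti; rewrite y0 (le_trans x0 xy).
  rewrite mul0r; apply: addr_ge0; apply: mulr_ge0 => //; rewrite ?subr_ge0 //;
    exact: mulr_ge0.
have py : 0 < phi y by apply: phi_pos; rewrite y0.
have [_ Fy0] := Ffin phi_pos phi_der phi_int (ltW y0) y1.
set D := Fv phi y + y * (phi y)^-1.
have S1 : y * Fv phi y - x * Fv phi x <= (y - x) * D.
  have [xe|xp] := eqVneq x 0.
    rewrite xe mul0r subr0 subr0 /D mulrDr lerDl.
    by apply: mulr_ge0; [exact: ltW|apply: mulr_ge0; rewrite ?invr_ge0 ltW].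
  have xp' : 0 < x by rewrite lt_neqAle eq_sym xp x0.
  have h := Fup phi_pos phi_der phi_der1 phi_int phi_log xp' xy y1.
  have h2 := ler_wpM2l x0 h.
  have e : x * (y ^+ 2 * (phi y)^-1 * (x^-1 - y^-1)) = (y - x) * (y * (phi y)^-1).
    by field; rewrite !gt_eqF.
  rewrite e in h2.
  have e2 : y * Fv phi y - x * Fv phi x = (y - x) * Fv phi y + x * (Fv phi y - Fv phi x) by ring.
  by rewrite e2 /D; lra.
have S2 : (z - y) * D <= z * Fv phi z - y * Fv phi y.
  have h := Flow phi_pos phi_der phi_der1 phi_int phi_log y0 yz z1.
  have zp : 0 < z by exact: lt_le_trans yz.
  have h2 := ler_wpM2l z0 h.
  have e : z * (y ^+ 2 * (phi y)^-1 * (y^-1 - z^-1)) = (z - y) * (y * (phi y)^-1).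
    by field; rewrite !gt_eqF.
  rewrite e in h2.
  have e2 : z * Fv phi z - y * Fv phi y = (z - y) * Fv phi y + z * (Fv phi z - Fv phi y) by ring.
  by rewrite e2 /D; lra.
have h1 := ler_wpM2l l0 S1.
have l1' : 0 <= 1 - l by rewrite subr_ge0.
have h2 := ler_wpM2l l1' S2.
have e : l * ((y - x) * D) = (1 - l) * ((z - y) * D) by rewrite /y; ring.
rewrite e in h1.
have := le_trans h1 h2.
set A := y * Fv phi y; set B := x * Fv phi x; set C := z * Fv phi z.
move=> h; nra.
Qed.

Lemma Hconv (R : realType) (phi : R -> R)
  (phi_pos : forall s : R, 0 < s <= 1 -> 0 < phi s)
  (phi_der : forall s : R, 0 < s < 1 -> derivable phi s 1)
  (phi_der1 : cvg ((fun h : R => h^-1 * (phi (h + 1) - phi 1)) @ 0^'-))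
  (phi_int : (inv_int phi 1 < +oo)%E)
  (phi_log : forall s : R, 0 < s < 1 -> (derive1 phi s) / phi s <= 2 / s)
  (x z l : R) : 0 <= x -> x <= 1 -> 0 <= z -> z <= 1 -> 0 <= l -> l <= 1 ->
  (l * x + (1 - l) * z) * Fv phi (l * x + (1 - l) * z)
    <= l * (x * Fv phi x) + (1 - l) * (z * Fv phi z).
Proof.
move=> x0 x1 z0 z1 l0 l1.
have [xz|zx] := leP x z.
  exact: Hconv_ord.
have a : 0 <= 1 - l by lra.
have b : 1 - l <= 1 by lra.
have h := Hconv_ord phi_pos phi_der phi_der1 phi_int phi_log z0 (ltW zx) x1 a b.
rewrite subKr in h.
by rewrite [l * x + _]addrC [l * (x * _) + _]addrC.
Qed.

Unset Implicit Arguments. Set Strict Implicit.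

Theorem mainTheorem6 (R : realType) (phi : R -> R)
  (phi_pos : forall s : R, 0 < s <= 1 -> 0 < phi s)
  (phi_der : forall s : R, 0 < s < 1 -> derivable phi s 1)
  (phi_der1 : cvg ((fun h : R => h^-1 * (phi (h + 1) - phi 1)) @ 0^'-))
  (phi_int : (inv_int phi 1 < +oo)%E)
  (phi_log : forall s : R, 0 < s < 1 -> (derive1 phi s) / phi s <= 2 / s) :
  forall (A1 N1 A2 N2 t : R),
    0 <= A1 <= 1 -> 0 <= N1 <= 1 -> 0 <= A2 <= 1 -> 0 <= N2 <= 1 ->
    0 <= t <= 1 ->
    Tfun phi (t * A1 + (1 - t) * A2) (t * N1 + (1 - t) * N2)
      <= t * Tfun phi A1 N1 + (1 - t) * Tfun phi A2 N2.
Proof.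
move=> A1 N1 A2 N2 t /andP[A10 A11] /andP[N10 N11] /andP[A20 A21]
  /andP[N20 N21] /andP[t0 t1].
rewrite /Tfun -!/(Fv phi _).
have v1p : 0 < A1 + 1 by lra.
have v2p : 0 < A2 + 1 by lra.
have vp : 0 < t * A1 + (1 - t) * A2 + 1 by nra.
set v1 := A1 + 1; set v2 := A2 + 1.
set v := t * A1 + (1 - t) * A2 + 1.
set N := t * N1 + (1 - t) * N2.
set l := t * v1 / v.
have x10 : 0 <= N1 / v1 by rewrite divr_ge0 // ltW.
have x11 : N1 / v1 <= 1 by rewrite ler_pdivrMr // mul1r /v1; lra.
have x20 : 0 <= N2 / v2 by rewrite divr_ge0 // ltW.
have x21 : N2 / v2 <= 1 by rewrite ler_pdivrMr // mul1r /v2; lra.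
have l0 : 0 <= l by rewrite /l divr_ge0 ?mulr_ge0 // ltW.
have l1 : l <= 1.
  rewrite /l ler_pdivrMr // mul1r /v /v1; nra.
have key := Hconv phi_pos phi_der phi_der1 phi_int phi_log x10 x11 x20 x21 l0 l1.
have ex : l * (N1 / v1) + (1 - l) * (N2 / v2) = N / v.
  rewrite /l /N /v /v1 /v2; field.
  by rewrite !gt_eqF.
rewrite ex in key.
have E1 : N * Fv phi (N / v) = v * (N / v * Fv phi (N / v)).
  move: (Fv phi (N / v)) => q; rewrite /N /v; field.
  by rewrite gt_eqF.
have E2 : v * (l * (N1 / v1 * Fv phi (N1 / v1)) + (1 - l) * (N2 / v2 * Fv phi (N2 / v2)))
   = t * (N1 * Fv phi (N1 / v1)) + (1 - t) * (N2 * Fv phi (N2 / v2)).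
  move: (Fv phi (N1 / v1)) (Fv phi (N2 / v2)) => q1 q2.
  rewrite /l /v /v1 /v2; field.
  by rewrite !gt_eqF.
rewrite E1 -E2.
apply: ler_wpM2l key; exact: ltW.
Qed.
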